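(* Let $\alpha=[a_0;a_1,a_2,\dots]$ be irrational with convergents $p_k/q_k$, and let $N=\sum_{k=0}^{K-1} b_k q_k$ be the Ostrowski expansion of a non-negative integer. For any $k \ge 0$ such that $b_k \ge 1$, \[ -1 < -q_k \| q_k \alpha \| + q_k \| q_{k+1} \alpha \| \le \varepsilon_k (N) \le q_k \| q_{k+1} \alpha \| < \frac{1}{2} . \] If $b_{k+1} \le (1-\delta ) a_{k+2}$ with some $\delta >0$, then $\varepsilon_k (N) \ge -(1-\delta /3) q_k \| q_k \alpha \|$. If moreover $\frac{\log a_j}{a_{j+1}}\le T$ for all $j\ge k_0$ with constants $k_0,T\ge1$, then $\varepsilon_k (N) \ge -\left(1-\frac{1}{e^T+2}\right)$ for any $k \ge k_0$ such that $b_k \ge 1$.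
   Context: $p_k/q_k=[a_0;a_1,\dots,a_k]$, with $q_0=1,q_1=a_1$, $q_{k+1}=a_{k+1}q_k+q_{k-1}$. $\|y\|$ denotes distance to the nearest integer. The Ostrowski expansion of $N\ge0$ is the unique representation $N=\sum_{k=0}^{K-1}b_kq_k$ with integers $0\le b_0<a_1$, $0\le b_k\le a_{k+1}$, and $b_{k-1}=0$ whenever $b_k=a_{k+1}$ (coefficients $b_k$ with $k\ge K$ are $0$). For such $N$, $\varepsilon_k(N):=q_k\sum_{\ell=k+1}^{K-1}(-1)^{k+\ell}b_\ell\|q_\ell\alpha\|$. *)

(* Defs.v *)
From Stdlib Require Import Reals ZArith Lia Lra.
Open Scope R_scope.

(* floor of a real as an integer: up x is the unique integer with x < up x <= x+1 *)
Definition Zfloor (x : R) : Z := (up x - 1)%Z.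

Definition ndist (y : R) : R :=
  Rmin (y - IZR (Zfloor y)) (IZR (Zfloor y) + 1 - y).

(* complete quotients of the continued fraction of alpha (Gauss map iteration):
   x_0 = alpha, x_{k+1} = 1 / (x_k - floor x_k) *)
Fixpoint cf_x (alpha : R) (k : nat) : R :=
  match k with
  | O => alpha
  | S k' => / (cf_x alpha k' - IZR (Zfloor (cf_x alpha k')))
  end.

Definition cf_a (alpha : R) (k : nat) : Z := Zfloor (cf_x alpha k).

(* pairs (q_k, q_{k+1}) with q_0 = 1, q_1 = a_1, q_{k+1} = a_{k+1} q_k + q_{k-1} *)
Fixpoint cf_qpair (alpha : R) (k : nat) : Z * Z :=
  match k with
  | O => (1%Z, cf_a alpha 1)
  | S k' => let (x, y) := cf_qpair alpha k' in
            (y, (cf_a alpha (S (S k')) * y + x)%Z)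
  end.

Definition cf_q (alpha : R) (k : nat) : Z := fst (cf_qpair alpha k).

Fixpoint rsum (f : nat -> R) (m n : nat) : R :=
  match n with
  | O => 0
  | S n' => f m + rsum f (S m) n'
  end.

Definition irrational (alpha : R) : Prop :=
  ~ exists p q : Z, q <> 0%Z /\ alpha = IZR p / IZR q.

Definition is_ostrowski (alpha : R) (N K : nat) (b : nat -> nat) : Prop :=
  INR N = rsum (fun k => INR (b k) * IZR (cf_q alpha k)) 0%nat K /\
  (Z.of_nat (b O) < cf_a alpha 1)%Z /\
  (forall k, (Z.of_nat (b k) <= cf_a alpha (S k))%Z) /\
  (forall k, (1 <= k)%nat -> Z.of_nat (b k) = cf_a alpha (S k) -> b (k - 1)%nat = 0%nat) /\
  (forall k, (K <= k)%nat -> b k = 0%nat).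

Definition ost_eps (alpha : R) (K : nat) (b : nat -> nat) (k : nat) : R :=
  IZR (cf_q alpha k) *
  rsum (fun l => (-1) ^ (k + l) * INR (b l) * ndist (IZR (cf_q alpha l) * alpha))
       (S k) (K - S k).

(* Main.v *)
Require Import Defs.
From Stdlib Require Import Reals ZArith Lia Lra.
Open Scope R_scope.

Lemma floor_spec x : IZR (Defs.Zfloor x) <= x < IZR (Defs.Zfloor x) + 1.
Proof. unfold Defs.Zfloor; destruct (archimed x) as [H1 H2]; rewrite minus_IZR; lra. Qed.

Lemma floor_unique x n : IZR n <= x < IZR n + 1 -> Defs.Zfloor x = n.
Proof.
  intros H. unfold Defs.Zfloor. rewrite <- (tech_up x (n+1)); [ring| |]; rewrite plus_IZR; lra.
Qed.

Definition rat (y:R) := exists p q : Z, q <> 0%Z /\ y = IZR p / IZR q.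

Lemma x_S a k : cf_x a (S k) = / (cf_x a k - IZR (cf_a a k)).
Proof. reflexivity. Qed.

Lemma x_irr a : irrational a -> forall k, ~ rat (cf_x a k).
Proof.
  intros Ha k; induction k. exact Ha.
  intros [p [q [Hq E]]]. apply IHk. rewrite x_S in E. unfold cf_a in E.
  set (y := cf_x a k) in *.
  destruct (Req_dec (y - IZR (Defs.Zfloor y)) 0) as [H0|H0].
  - exists (Defs.Zfloor y), 1%Z. split. lia. unfold Rdiv; rewrite Rinv_1; lra.
  - assert (Hp : IZR p <> 0).
    { intro Hp0. rewrite Hp0 in E. unfold Rdiv in E. rewrite Rmult_0_l in E.
      apply (Rinv_neq_0_compat _ H0). exact E. }
    assert (Hq' : IZR q <> 0) by (apply not_0_IZR; exact Hq).
    assert (E2 : y - IZR (Defs.Zfloor y) = IZR q / IZR p).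
    { rewrite <- (Rinv_inv (y - IZR (Defs.Zfloor y))). rewrite E. unfold Rdiv. rewrite Rinv_mult, Rinv_inv. ring. }
    exists (Defs.Zfloor y * p + q)%Z, p. split.
    + intro. subst. apply Hp. reflexivity.
    + rewrite plus_IZR, mult_IZR. apply (Rplus_eq_reg_r (- IZR (Defs.Zfloor y))).
      replace (y + - IZR (Defs.Zfloor y)) with (IZR q / IZR p) by lra. field. exact Hp.
Qed.

Lemma frac_pos a k : irrational a -> 0 < cf_x a k - IZR (cf_a a k) < 1.
Proof.
  intros Ha. pose proof (floor_spec (cf_x a k)). unfold cf_a.
  destruct (Req_dec (cf_x a k) (IZR (Defs.Zfloor (cf_x a k)))) as [E|E].
  - exfalso. apply (x_irr a Ha k). exists (Defs.Zfloor (cf_x a k)), 1%Z. split. lia.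
    unfold Rdiv; rewrite Rinv_1; lra.
  - lra.
Qed.

Lemma x_gt1 a k : irrational a -> 1 < cf_x a (S k).
Proof.
  intros Ha. rewrite x_S. pose proof (frac_pos a k Ha).
  rewrite <- Rinv_1 at 1. apply Rinv_lt_contravar; nra.
Qed.

Lemma a_ge1 a k : irrational a -> 1 <= IZR (cf_a a (S k)).
Proof.
  intros Ha. pose proof (x_gt1 a k Ha). pose proof (floor_spec (cf_x a (S k))).
  unfold cf_a. apply IZR_le. assert (0 < Defs.Zfloor (cf_x a (S k)))%Z.
  { apply lt_IZR. lra. } lia.
Qed.

Fixpoint th a n := match n with O => 1 | S k => th a k / cf_x a (S k) end.

Lemma th_pos a n : irrational a -> 0 < th a n.
Proof.
  intros Ha. induction n; cbn [th]. lra. pose proof (x_gt1 a n Ha).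
  unfold Rdiv. apply Rmult_lt_0_compat. lra. apply Rinv_0_lt_compat; lra.
Qed.

Lemma th_rec a k : irrational a ->
  th a k = IZR (cf_a a (S k)) * th a (S k) + th a (S (S k)).
Proof.
  intros Ha. pose proof (x_gt1 a k Ha).
  assert (E1 : th a (S k) * cf_x a (S k) = th a k) by (cbn [th]; field; lra).
  assert (E2 : th a (S (S k)) = th a (S k) * (cf_x a (S k) - IZR (cf_a a (S k)))).
  { change (th a (S (S k))) with (th a (S k) / cf_x a (S (S k))).
    unfold Rdiv. rewrite x_S, Rinv_inv. reflexivity. }
  rewrite E2, <- E1. ring.
Qed.

Definition Q a n := match n with O => 0 | S k => IZR (cf_q a k) end.

Lemma qfst a n : fst (cf_qpair a (S n)) = snd (cf_qpair a n).
Proof. cbn [cf_qpair]. destruct (cf_qpair a n); reflexivity. Qed.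
Lemma qsnd a n : snd (cf_qpair a (S n)) = (cf_a a (S (S n)) * snd (cf_qpair a n) + fst (cf_qpair a n))%Z.
Proof. cbn [cf_qpair]. destruct (cf_qpair a n); reflexivity. Qed.

Lemma Q_rec a j : Q a (S (S j)) = IZR (cf_a a (S j)) * Q a (S j) + Q a j.
Proof.
  destruct j.
  - simpl. unfold cf_q. simpl. ring.
  - simpl Q. unfold cf_q. rewrite qfst, qsnd, qfst. rewrite plus_IZR, mult_IZR. reflexivity.
Qed.

Lemma Q_mono a n : irrational a -> 0 <= Q a n /\ Q a n <= Q a (S n) /\ 1 <= Q a (S n).
Proof.
  intros Ha. induction n.
  - simpl. unfold cf_q. simpl. lra.
  - destruct IHn as [A [B C]]. pose proof (a_ge1 a n Ha). rewrite Q_rec. split; [lra|]. nra.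
Qed.

Lemma det a n : irrational a -> Q a (S n) * th a n + Q a n * th a (S n) = 1.
Proof.
  intros Ha. induction n.
  - simpl. unfold cf_q. simpl. ring.
  - rewrite Q_rec. replace (th a (S (S n))) with (th a n - IZR (cf_a a (S n)) * th a (S n))
      by (rewrite (th_rec a n Ha); ring). rewrite <- IHn. ring.
Qed.

Lemma pexist a n : irrational a ->
  (exists p : Z, Q a n * a - IZR p = - (-1)^n * th a n) /\
  (exists p : Z, Q a (S n) * a - IZR p = - (-1)^(S n) * th a (S n)).
Proof.
  intros Ha. induction n.
  - split. exists 1%Z. simpl. ring.
    exists (cf_a a 0). simpl Q. unfold cf_q. simpl. unfold cf_a. simpl. unfold Rdiv. rewrite Rinv_inv. ring.
  - destruct IHn as [[p0 H0] [p1 H1]]. split. exists p1; exact H1.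
    exists (cf_a a (S n) * p1 + p0)%Z. rewrite Q_rec, plus_IZR, mult_IZR.
    replace (th a (S (S n))) with (th a n - IZR (cf_a a (S n)) * th a (S n))
      by (rewrite (th_rec a n Ha); ring).
    change ((-1)^(S (S n))) with (-1 * (-1 * (-1)^n)).
    change ((-1)^(S n)) with (-1 * (-1)^n) in H1.
    transitivity (IZR (cf_a a (S n)) * (Q a (S n) * a - IZR p1) + (Q a n * a - IZR p0)); [ring|].
    rewrite H0, H1. ring.
Qed.

Lemma ndist_near (p : Z) s : -1/2 <= s <= 1/2 -> ndist (IZR p + s) = Rabs s.
Proof.
  intros H. unfold ndist. destruct (Rle_lt_dec 0 s).
  - rewrite (floor_unique _ p) by lra. rewrite Rabs_pos_eq by lra.
    replace (IZR p + s - IZR p) with s by ring. apply Rmin_left; lra.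
  - rewrite (floor_unique _ (p - 1)) by (rewrite minus_IZR; lra). rewrite minus_IZR.
    rewrite Rabs_left by lra. replace (IZR p - 1 + 1 - (IZR p + s)) with (-s) by ring.
    apply Rmin_right; lra.
Qed.

Lemma sign_cases n : (-1)^n = 1 \/ (-1)^n = -1.
Proof. induction n; simpl. auto. destruct IHn as [E|E]; rewrite E; [right|left]; ring. Qed.

Lemma D_th a l : irrational a -> th a (S l) <= 1/2 ->
  ndist (IZR (cf_q a l) * a) = th a (S l).
Proof.
  intros Ha H. destruct (pexist a l Ha) as [_ [p Hp]]. change (Q a (S l)) with (IZR (cf_q a l)) in Hp.
  pose proof (th_pos a (S l) Ha).
  replace (IZR (cf_q a l) * a) with (IZR p + - (-1)^(S l) * th a (S l)) by lra.
  destruct (sign_cases (S l)) as [E|E]; rewrite E, ndist_near.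
  - rewrite Rabs_left; lra.
  - lra.
  - rewrite Rabs_pos_eq; lra.
  - lra.
Qed.

Lemma th_dec a n : irrational a -> th a (S n) < th a n.
Proof.
  intros Ha. rewrite (th_rec a n Ha). pose proof (a_ge1 a n Ha).
  pose proof (th_pos a (S n) Ha). pose proof (th_pos a (S (S n)) Ha). nra.
Qed.

Lemma th_half a n : irrational a -> Q a (S n) * th a (S (S n)) < 1/2.
Proof.
  intros Ha. pose proof (det a (S n) Ha). pose proof (th_dec a (S n) Ha).
  destruct (Q_mono a (S n) Ha) as [A [B C]]. pose proof (th_pos a (S (S n)) Ha).
  assert (Q a (S (S n)) * th a (S (S n)) < Q a (S (S n)) * th a (S n)) by (apply Rmult_lt_compat_l; lra).
  assert (Q a (S n) * th a (S (S n)) <= Q a (S (S n)) * th a (S (S n))) by (apply Rmult_le_compat_r; lra).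
  lra.
Qed.

Lemma D_th1 a l : irrational a -> (1 <= l)%nat -> ndist (IZR (cf_q a l) * a) = th a (S l).
Proof.
  intros Ha Hl. apply D_th; auto. destruct l. lia.
  pose proof (th_half a l Ha). destruct (Q_mono a l Ha) as [_ [_ C]]. pose proof (th_pos a (S (S l)) Ha).
  assert (th a (S (S l)) <= Q a (S l) * th a (S (S l))) by nra. lra.
Qed.

Lemma pow_m1_double m : (-1)^(m+m) = 1.
Proof. replace (m+m)%nat with (2*m)%nat by lia. apply pow_1_even. Qed.

Lemma rsum_sign (u v : nat -> R) c m n :
  rsum (fun l => (-1)^(S c + l) * u l * v l) m n = - rsum (fun l => (-1)^(c+l) * u l * v l) m n.
Proof.
  revert m; induction n; intros m; cbn [rsum]. ring.
  rewrite IHn. change ((-1)^(S c + m)) with (-1 * (-1)^(c+m)). ring.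
Qed.

Lemma rsum_step (u v : nat -> R) m n :
  rsum (fun l => (-1)^(m+l) * u l * v l) m (S n) =
  u m * v m - rsum (fun l => (-1)^(S m + l) * u l * v l) (S m) n.
Proof.
  cbn [rsum]. rewrite rsum_sign, pow_m1_double. ring.
Qed.

Lemma G_bound a N K b : irrational a -> is_ostrowski a N K b ->
  forall n m, (1 <= m)%nat ->
  - th a (S m) <= rsum (fun l => (-1)^(m+l) * INR (b l) * ndist (IZR (cf_q a l) * a)) m n
  <= INR (b m) * th a (S m) + th a (S (S m)).
Proof.
  intros Ha [_ [_ [H3 [H4 _]]]]. induction n; intros m Hm.
  - cbn [rsum]. pose proof (th_pos a (S m) Ha). pose proof (th_pos a (S (S m)) Ha).
    pose proof (pos_INR (b m)). split. lra.
    assert (0 <= INR (b m) * th a (S m)) by (apply Rmult_le_pos; lra). lra.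
  - rewrite (rsum_step (fun l => INR (b l)) (fun l => ndist (IZR (cf_q a l) * a))). cbv beta.
    rewrite (D_th1 a m Ha Hm).
    destruct (IHn (S m) ltac:(lia)) as [L U].
    set (G' := rsum _ (S m) n) in *.
    pose proof (th_pos a (S m) Ha). pose proof (th_pos a (S (S m)) Ha).
    pose proof (th_pos a (S (S (S m))) Ha). pose proof (th_rec a (S m) Ha).
    pose proof (pos_INR (b m)).
    assert (0 <= INR (b m) * th a (S m)) by (apply Rmult_le_pos; lra).
    split; [|lra].
    destruct (Z.eq_dec (Z.of_nat (b (S m))) (cf_a a (S (S m)))) as [E|E].
    + assert (Hb : b m = 0%nat).
      { pose proof (H4 (S m) ltac:(lia) E) as X. replace (S m - 1)%nat with m in X by lia. exact X. }
      rewrite Hb in *. rewrite INR_IZR_INZ, E in U. simpl INR. lra.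
    + pose proof (H3 (S m)). assert (Z.of_nat (b (S m)) <= cf_a a (S (S m)) - 1)%Z by lia.
      assert (INR (b (S m)) <= IZR (cf_a a (S (S m))) - 1).
      { rewrite INR_IZR_INZ. rewrite <- (minus_IZR _ 1). apply IZR_le. lia. }
      assert (INR (b (S m)) * th a (S (S m)) <= (IZR (cf_a a (S (S m))) - 1) * th a (S (S m)))
        by (apply Rmult_le_compat_r; lra).
      lra.
Qed.

Lemma eps_bounds a N K b k : irrational a -> is_ostrowski a N K b ->
  - IZR (cf_q a k) * (INR (b (S k)) * th a (S (S k)) + th a (S (S (S k)))) <= ost_eps a K b k
  <= IZR (cf_q a k) * th a (S (S k)).
Proof.
  intros Ha Ho. unfold ost_eps.
  rewrite <- (Ropp_involutive (rsum _ (S k) (K - S k))).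
  rewrite <- (rsum_sign (fun l => INR (b l)) (fun l => ndist (IZR (cf_q a l) * a))).
  destruct (G_bound a N K b Ha Ho (K - S k) (S k) ltac:(lia)) as [L U].
  destruct (Q_mono a k Ha) as [_ [_ C]]. change (Q a (S k)) with (IZR (cf_q a k)) in C.
  set (G := rsum _ (S k) (K - S k)) in *.
  split.
  - assert (IZR (cf_q a k) * G <= IZR (cf_q a k) * (INR (b (S k)) * th a (S (S k)) + th a (S (S (S k)))))
      by (apply Rmult_le_compat_l; lra). lra.
  - assert (IZR (cf_q a k) * - th a (S (S k)) <= IZR (cf_q a k) * G)
      by (apply Rmult_le_compat_l; lra). lra.
Qed.

Lemma Dk_lem a N K b k : irrational a -> is_ostrowski a N K b -> (1 <= b k)%nat ->
  ndist (IZR (cf_q a k) * a) = th a (S k).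
Proof.
  intros Ha [_ [H2 _]] Hb. destruct k. 2: apply D_th1; auto; lia.
  apply D_th; auto. assert (2 <= cf_a a 1)%Z by lia.
  pose proof (floor_spec (cf_x a 1)). change (Defs.Zfloor (cf_x a 1)) with (cf_a a 1) in H0.
  apply IZR_le in H. cbn [th]. unfold Rdiv. rewrite !Rmult_1_l.
  apply Rinv_le_contravar; lra.
Qed.

Lemma bb_lem a N K b k : irrational a -> is_ostrowski a N K b -> (1 <= b k)%nat ->
  INR (b (S k)) <= IZR (cf_a a (S (S k))) - 1.
Proof.
  intros Ha [_ [_ [H3 [H4 _]]]] Hb.
  destruct (Z.eq_dec (Z.of_nat (b (S k))) (cf_a a (S (S k)))) as [E|E].
  - pose proof (H4 (S k) ltac:(lia) E) as X. replace (S k - 1)%nat with k in X by lia. lia.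
  - pose proof (H3 (S k)). rewrite INR_IZR_INZ. rewrite <- (minus_IZR _ 1). apply IZR_le. lia.
Qed.

Lemma part1 a N K b k : irrational a -> is_ostrowski a N K b -> (1 <= b k)%nat ->
  IZR (cf_q a k) * th a (S k) < 1 /\
  - IZR (cf_q a k) * th a (S k) + IZR (cf_q a k) * th a (S (S k)) <= ost_eps a K b k /\
  ost_eps a K b k <= IZR (cf_q a k) * th a (S (S k)) /\
  IZR (cf_q a k) * th a (S (S k)) < 1/2.
Proof.
  intros Ha Ho Hb.
  pose proof (eps_bounds a N K b k Ha Ho) as [L U].
  pose proof (bb_lem a N K b k Ha Ho Hb).
  pose proof (th_rec a (S k) Ha).
  pose proof (th_pos a (S k) Ha). pose proof (th_pos a (S (S k)) Ha). pose proof (th_pos a (S (S (S k))) Ha).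
  destruct (Q_mono a k Ha) as [Q0 [Q1 Q2]]. pose proof (det a k Ha) as D.
  pose proof (th_dec a k Ha). pose proof (th_half a k Ha).
  change (Q a (S k)) with (IZR (cf_q a k)) in *.
  set (q := IZR (cf_q a k)) in *.
  split; [|split; [|split]]; try lra.
  - assert (q * th a (S k) < q * th a k) by (apply Rmult_lt_compat_l; lra).
    assert (0 <= Q a k * th a (S k)) by (apply Rmult_le_pos; lra). lra.
  - assert (INR (b (S k)) * th a (S (S k)) <= (IZR (cf_a a (S (S k))) - 1) * th a (S (S k)))
      by (apply Rmult_le_compat_r; lra).
    assert (q * (INR (b (S k)) * th a (S (S k)) + th a (S (S (S k)))) <=
            q * (th a (S k) - th a (S (S k)))) by (apply Rmult_le_compat_l; lra).
    lra.
Qed.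

Theorem lemma1 (alpha : R) (N K : nat) (b : nat -> nat) :
  irrational alpha ->
  is_ostrowski alpha N K b ->
  (forall k : nat, (1 <= b k)%nat ->
     -1 < - IZR (cf_q alpha k) * ndist (IZR (cf_q alpha k) * alpha)
          + IZR (cf_q alpha k) * ndist (IZR (cf_q alpha (S k)) * alpha)
     /\ - IZR (cf_q alpha k) * ndist (IZR (cf_q alpha k) * alpha)
          + IZR (cf_q alpha k) * ndist (IZR (cf_q alpha (S k)) * alpha)
        <= ost_eps alpha K b k
     /\ ost_eps alpha K b k <= IZR (cf_q alpha k) * ndist (IZR (cf_q alpha (S k)) * alpha)
     /\ IZR (cf_q alpha k) * ndist (IZR (cf_q alpha (S k)) * alpha) < 1 / 2)
  /\
  (forall (k : nat) (delta : R), (1 <= b k)%nat -> 0 < delta ->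
     INR (b (S k)) <= (1 - delta) * IZR (cf_a alpha (S (S k))) ->
     ost_eps alpha K b k >= - (1 - delta / 3) * IZR (cf_q alpha k) * ndist (IZR (cf_q alpha k) * alpha))
  /\
  (forall (k0 : nat) (T : R), (1 <= k0)%nat -> 1 <= T ->
     (forall j : nat, (k0 <= j)%nat -> ln (IZR (cf_a alpha j)) / IZR (cf_a alpha (S j)) <= T) ->
     forall k : nat, (k0 <= k)%nat -> (1 <= b k)%nat ->
       ost_eps alpha K b k >= - (1 - 1 / (exp T + 2))).
Proof.
  intros Ha Ho. split; [|split].
  - intros k Hb. rewrite (Dk_lem alpha N K b k Ha Ho Hb), (D_th1 alpha (S k) Ha ltac:(lia)).
    pose proof (part1 alpha N K b k Ha Ho Hb) as [P1 [P2 [P3 P4]]].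
    destruct (Q_mono alpha k Ha) as [_ [_ Q2]]. change (Q alpha (S k)) with (IZR (cf_q alpha k)) in Q2.
    pose proof (th_pos alpha (S (S k)) Ha).
    assert (0 <= IZR (cf_q alpha k) * th alpha (S (S k))) by (apply Rmult_le_pos; lra).
    split; [|split; [|split]]; lra.
  - intros k delta Hb Hd Hbd. rewrite (Dk_lem alpha N K b k Ha Ho Hb).
    pose proof (eps_bounds alpha N K b k Ha Ho) as [L U].
    pose proof (th_rec alpha (S k) Ha).
    pose proof (th_pos alpha (S k) Ha). pose proof (th_pos alpha (S (S k)) Ha).
    pose proof (th_pos alpha (S (S (S k))) Ha). pose proof (th_dec alpha (S (S k)) Ha).
    pose proof (a_ge1 alpha (S k) Ha).
    destruct (Q_mono alpha k Ha) as [_ [_ Q2]]. change (Q alpha (S k)) with (IZR (cf_q alpha k)) in Q2.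
    set (q := IZR (cf_q alpha k)) in *. set (A := IZR (cf_a alpha (S (S k)))) in *.
    set (d1 := th alpha (S (S k))) in *. set (d2 := th alpha (S (S (S k)))) in *.
    assert (INR (b (S k)) * d1 <= (1 - delta) * A * d1) by (apply Rmult_le_compat_r; lra).
    assert (0 <= delta * (2 * A * d1 - d2)).
    { apply Rmult_le_pos. lra. assert (d1 <= A * d1) by nra. lra. }
    assert (INR (b (S k)) * d1 + d2 <= (1 - delta/3) * th alpha (S k)) by (rewrite H; lra).
    assert (q * (INR (b (S k)) * d1 + d2) <= q * ((1 - delta/3) * th alpha (S k)))
      by (apply Rmult_le_compat_l; lra).
    lra.
  - intros k0 T Hk0 HT Hj k Hk Hb.
    pose proof (part1 alpha N K b k Ha Ho Hb) as [P1 [P2 [P3 P4]]].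
    destruct (Q_mono alpha k Ha) as [Q0 [Q1 Q2]]. change (Q alpha (S k)) with (IZR (cf_q alpha k)) in *.
    pose proof (th_pos alpha (S (S k)) Ha). pose proof (th_pos alpha (S k) Ha).
    pose proof (th_pos alpha (S (S k)) Ha).
    assert (0 <= IZR (cf_q alpha k) * th alpha (S (S k))) by (apply Rmult_le_pos; lra).
    pose proof (exp_pos T) as ET.
    assert (Hgoal : IZR (cf_q alpha k) * th alpha (S k) <= 1 - 1 / (exp T + 2)).
    2: lra.
    destruct k as [|k']. lia.
    pose proof (a_ge1 alpha k' Ha) as Ak. pose proof (a_ge1 alpha (S k') Ha) as Ak1.
    pose proof (det alpha (S k') Ha) as D. change (Q alpha (S (S k'))) with (IZR (cf_q alpha (S k'))) in D. pose proof (th_rec alpha (S k') Ha) as R.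
    pose proof (th_pos alpha (S (S (S k'))) Ha).
    destruct (Z_lt_le_dec 1 (cf_a alpha (S (S k')))) as [A2|A1].
    + assert (A2' : (2 <= cf_a alpha (S (S k')))%Z) by lia. apply IZR_le in A2'.
      assert (0 <= Q alpha (S k') * th alpha (S (S k'))) by (apply Rmult_le_pos; lra).
      assert (2 * th alpha (S (S k')) <= th alpha (S k')) by nra.
      assert (IZR (cf_q alpha (S k')) * (2 * th alpha (S (S k'))) <= IZR (cf_q alpha (S k')) * th alpha (S k'))
        by (apply Rmult_le_compat_l; lra).
      assert (1 / (exp T + 2) <= 1/2).
      { unfold Rdiv. rewrite !Rmult_1_l. apply Rinv_le_contravar; lra. }
      lra.
    + assert (E1 : cf_a alpha (S (S k')) = 1%Z) by (apply le_IZR in Ak1; lia).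
      pose proof (Hj (S k') Hk) as HJ. rewrite E1 in HJ. unfold Rdiv in HJ. rewrite Rinv_1, Rmult_1_r in HJ.
      set (c := IZR (cf_a alpha (S k'))) in *.
      assert (Hc : c <= exp T).
      { rewrite <- (exp_ln c) by lra. destruct (Rle_lt_or_eq_dec _ _ HJ) as [L|L].
        left; apply exp_increasing; exact L. rewrite L; lra. }
      pose proof (Q_rec alpha k') as QR. fold c in QR.
      destruct (Q_mono alpha (S k') Ha) as [_ [_ QB]].
      destruct (Q_mono alpha k' Ha) as [_ [QC _]].
      change (Q alpha (S (S k'))) with (IZR (cf_q alpha (S k'))) in *.
      set (A := IZR (cf_q alpha (S k'))) in *. set (B := Q alpha (S k')) in *.
      set (u := th alpha (S (S k'))) in *.
      pose proof (th_dec alpha (S k') Ha) as TD. fold u in TD.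
      assert (A * u < A * th alpha (S k')) by (apply Rmult_lt_compat_l; lra).
      assert (HU : u * (A + B) < 1) by lra.
      assert (HAB : A <= (c + 1) * B) by lra.
      assert (h1 : (c+1) * (u * (A + B)) <= (c+1) * 1) by (apply Rmult_le_compat_l; lra).
      assert (h2 : u * A <= u * ((c+1) * B)) by (apply Rmult_le_compat_l; lra).
      assert (h3 : A * u * (c + 2) <= c + 1) by lra.
      assert (Hw : (c+2) * / (c+2) = 1) by (apply Rinv_r; lra).
      assert (h4 : A * u = A * u * (c+2) * / (c+2)) by (field; lra).
      assert (h5 : A * u * (c+2) * / (c+2) <= (c+1) * / (c+2))
        by (apply Rmult_le_compat_r; [left; apply Rinv_0_lt_compat; lra | lra]).
      assert (h6 : / (exp T + 2) <= / (c + 2)) by (apply Rinv_le_contravar; lra).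
      unfold Rdiv. rewrite Rmult_1_l. lra.
Qed.
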